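(* Let $a_2>0$ and consider the two-link parallel network with unit demand and latencies $\ell_1(x_1)=x_1$, $\ell_2(x_2)=a_2x_2$. Then every $t\in\mathcal{T}(\infty)$ equals $t=\left(\frac{2a_2+1}{3},\frac{a_2+2}{3}\right)$, and for this $t$, $$\frac{C(x(t))}{C(x^* )}=\frac{a_2^2+7a_2+1}{9a_2},$$ where $x^*$ is the optimal flow. In particular this ratio tends to $\infty$ as $a_2\to\infty$.
   Context: Flows $x\in\mathbb{R}^2_+$ with $x_1+x_2=1$; $C(x)=\sum_i\ell_i(x_i)x_i$; $x^*$ minimizes $C$. For tolls $t\in\mathbb{R}^2_+$, $x(t)$ is the unique Wardrop equilibrium for $t$ (for all $i,j$ with $x_i>0$: $\ell_i(x_i)+t_i\le\ell_j(x_j)+t_j$). Profit $\Pi_i(t)=t_ix_i(t)$. $\mathcal{T}(\infty)$: the set of toll vectors $t\in\mathbb{R}^2_+$ such that for every $i$ and every $t'_i\ge0$, $\Pi_i(t_i,t_{-i})\ge\Pi_i(t'_i,t_{-i})$ (flow recomputed). *)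

(* Defs.v *)
From Stdlib Require Import Reals Lra ClassicalEpsilon.
Open Scope R_scope.

Inductive link : Type := L1 | L2.

Definition link_eqb (i j : link) : bool :=
  match i, j with L1, L1 | L2, L2 => true | _, _ => false end.

Definition vec := link -> R.

Definition lat (a2 : R) (i : link) (y : R) : R :=
  match i with L1 => y | L2 => a2 * y end.

Definition feasible (x : vec) : Prop :=
  0 <= x L1 /\ 0 <= x L2 /\ x L1 + x L2 = 1.

Definition nonneg (t : vec) : Prop := 0 <= t L1 /\ 0 <= t L2.

Definition cost (a2 : R) (x : vec) : R :=
  lat a2 L1 (x L1) * x L1 + lat a2 L2 (x L2) * x L2.

Definition is_opt (a2 : R) (x : vec) : Prop :=
  feasible x /\ forall y, feasible y -> cost a2 x <= cost a2 y.

Definition wardrop (a2 : R) (t x : vec) : Prop :=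
  feasible x /\
  forall i j, 0 < x i -> lat a2 i (x i) + t i <= lat a2 j (x j) + t j.

Definition default_flow : vec := fun _ => 1/2.

(* x(t): the (unique) Wardrop equilibrium for t, selected by Hilbert's epsilon. *)
Definition eq_flow (a2 : R) (t : vec) : vec :=
  epsilon (inhabits default_flow) (wardrop a2 t).

(* x^star: the (unique) optimal flow, selected by Hilbert's epsilon. *)
Definition opt_flow (a2 : R) : vec :=
  epsilon (inhabits default_flow) (is_opt a2).

Definition profit (a2 : R) (i : link) (t : vec) : R := t i * eq_flow a2 t i.

Definition upd (t : vec) (i : link) (v : R) : vec :=
  fun j => if link_eqb i j then v else t j.

Definition Tinf (a2 : R) (t : vec) : Prop :=
  nonneg t /\
  forall i (v : R), 0 <= v -> profit a2 i t >= profit a2 i (upd t i v).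

Definition tstar (a2 : R) : vec :=
  fun i => match i with L1 => (2 * a2 + 1) / 3 | L2 => (a2 + 2) / 3 end.

Definition ratio (a2 : R) : R :=
  cost a2 (eq_flow a2 (tstar a2)) / cost a2 (opt_flow a2).

(* Main.v *)
Require Import Defs.
From Stdlib Require Import Reals Lra Psatz ClassicalEpsilon.
Open Scope R_scope.

Lemma ward_exists a2 t : 0 < a2 -> exists x, wardrop a2 t x.
Proof.
  intros Ha.
  set (c := a2 + t L2 - t L1).
  assert (Hw : 0 < / (1 + a2)) by (apply Rinv_0_lt_compat; lra).
  assert (Hww : (1 + a2) * / (1 + a2) = 1) by (field; lra).
  destruct (Rle_dec c 0) as [H0|H0].
  - exists (fun i => match i with L1 => 0 | L2 => 1 end).
    split; [unfold feasible; simpl; lra|].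
    intros i j Hi; destruct i, j; simpl in *; unfold c in *; nra.
  - destruct (Rle_dec (1 + a2) c) as [H1|H1].
    + exists (fun i => match i with L1 => 1 | L2 => 0 end).
      split; [unfold feasible; simpl; lra|].
      intros i j Hi; destruct i, j; simpl in *; unfold c in *; nra.
    + set (p := c * / (1 + a2)).
      assert (Hp : p * (1 + a2) = c) by (unfold p; field; lra).
      assert (Hp0 : 0 < p) by (unfold p; nra).
      assert (Hp1 : p < 1) by nra.
      exists (fun i => match i with L1 => p | L2 => 1 - p end).
      split; [unfold feasible; simpl; lra|].
      intros i j Hi; destruct i, j; simpl in *; unfold c in *; nra.
Qed.

Lemma eq_flow_ward a2 t : 0 < a2 -> wardrop a2 t (eq_flow a2 t).
Proof. intros Ha; unfold eq_flow; apply epsilon_spec; now apply ward_exists. Qed.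

Lemma ward_interior a2 t x : 0 < a2 -> wardrop a2 t x ->
  0 < a2 + t L2 - t L1 < 1 + a2 ->
  x L1 * (1 + a2) = a2 + t L2 - t L1 /\ x L2 = 1 - x L1.
Proof.
  intros Ha [[F1 [F2 F3]] W] Hc.
  pose proof (W L1 L2) as W12; pose proof (W L2 L1) as W21; simpl in *.
  destruct (Req_dec (x L1) 0) as [E|E].
  - assert (x L2 = 1) by lra. exfalso. specialize (W21 ltac:(lra)). nra.
  - destruct (Req_dec (x L2) 0) as [E2|E2].
    + assert (x L1 = 1) by lra. exfalso. specialize (W12 ltac:(lra)). nra.
    + specialize (W12 ltac:(lra)); specialize (W21 ltac:(lra)). split; nra.
Qed.

Lemma ward_low a2 t x : 0 < a2 -> wardrop a2 t x ->
  a2 + t L2 - t L1 <= 0 -> x L1 = 0 /\ x L2 = 1.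
Proof.
  intros Ha [[F1 [F2 F3]] W] Hc.
  pose proof (W L1 L2) as W12; simpl in *.
  destruct (Req_dec (x L1) 0) as [E|E]; [lra|].
  specialize (W12 ltac:(lra)). exfalso; nra.
Qed.

Lemma ward_high a2 t x : 0 < a2 -> wardrop a2 t x ->
  1 + a2 <= a2 + t L2 - t L1 -> x L1 = 1 /\ x L2 = 0.
Proof.
  intros Ha [[F1 [F2 F3]] W] Hc.
  pose proof (W L2 L1) as W21; simpl in *.
  destruct (Req_dec (x L2) 0) as [E|E]; [lra|].
  specialize (W21 ltac:(lra)). exfalso; nra.
Qed.

Lemma loc_opt L H t m : 0 <= t -> L < t -> t < H -> (0 < t \/ 0 < m) -> m < H ->
  (forall v, 0 <= v -> L < v -> v < H -> (t - m)^2 <= (v - m)^2) -> t = m.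
Proof.
  intros H0 HL HH Hor Hm Hv.
  destruct (Rle_dec 0 m) as [m0|m0].
  - destruct (Rlt_dec L m) as [mL|mL].
    + specialize (Hv m m0 mL Hm). nra.
    + set (lo := Rmax L 0).
      assert (lo < t) by (unfold lo; apply Rmax_lub_lt; lra).
      assert (L <= lo /\ 0 <= lo) by (unfold lo; split; [apply Rmax_l|apply Rmax_r]).
      specialize (Hv ((t + lo)/2) ltac:(lra) ltac:(lra) ltac:(lra)). nra.
  - assert (0 < t) by lra.
    set (lo := Rmax L 0).
    assert (lo < t) by (unfold lo; apply Rmax_lub_lt; lra).
    assert (L <= lo /\ 0 <= lo) by (unfold lo; split; [apply Rmax_l|apply Rmax_r]).
    specialize (Hv ((t + lo)/2) ltac:(lra) ltac:(lra) ltac:(lra)). nra.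
Qed.

Lemma Tinf_char a2 t : 0 < a2 -> Tinf a2 t ->
  t L1 = (2 * a2 + 1) / 3 /\ t L2 = (a2 + 2) / 3.
Proof.
  intros Ha [[N1 N2] Nash].
  pose proof (eq_flow_ward a2 t Ha) as W.
  set (c := a2 + t L2 - t L1) in *.
  destruct (Rle_dec c 0) as [Hc|Hc].
  - exfalso.
    destruct (ward_low a2 t _ Ha W Hc) as [E1 E2].
    set (v := t L2 + a2 / 2).
    specialize (Nash L1 v ltac:(unfold v; lra)).
    unfold profit in Nash.
    assert (S1 : upd t L1 v L1 = v) by reflexivity.
    assert (S2 : upd t L1 v L2 = t L2) by reflexivity.
    pose proof (eq_flow_ward a2 (upd t L1 v) Ha) as W'.
    set (s := upd t L1 v) in *. clearbody s.
    destruct (ward_interior a2 _ _ Ha W') as [I1 I2]; [rewrite S1, S2; unfold v; lra|].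
    rewrite E1, S1 in Nash. unfold v in *. nra.
  - destruct (Rle_dec (1 + a2) c) as [Hc'|Hc'].
    + exfalso.
      destruct (ward_high a2 t _ Ha W Hc') as [E1 E2].
      set (v := t L1 + 1/2).
      specialize (Nash L2 v ltac:(unfold v; lra)).
      unfold profit in Nash.
      assert (S1 : upd t L2 v L1 = t L1) by reflexivity.
      assert (S2 : upd t L2 v L2 = v) by reflexivity.
      pose proof (eq_flow_ward a2 (upd t L2 v) Ha) as W'.
      set (s := upd t L2 v) in *. clearbody s.
      destruct (ward_interior a2 _ _ Ha W') as [I1 I2]; [rewrite S1, S2; unfold v; lra|].
      rewrite E2, S2 in Nash. unfold v in *.
      set (y := eq_flow a2 s L2) in *.
      assert (Hy : y * (1 + a2) = 1/2) by nra.
      assert (0 < y) by nra. nra.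
    + apply Rnot_le_lt in Hc. apply Rnot_le_lt in Hc'. unfold c in *.
      destruct (ward_interior a2 t _ Ha W ltac:(lra)) as [I1 I2].
      assert (T1 : t L1 = (a2 + t L2) / 2).
      { apply (loc_opt (t L2 - 1) (a2 + t L2)); [lra|lra|lra|right; lra|lra|].
        intros v v0 vL vH.
        specialize (Nash L1 v v0).
        unfold profit in Nash.
        assert (S1 : upd t L1 v L1 = v) by reflexivity.
        assert (S2 : upd t L1 v L2 = t L2) by reflexivity.
        pose proof (eq_flow_ward a2 (upd t L1 v) Ha) as W'.
        set (s := upd t L1 v) in *. clearbody s.
        destruct (ward_interior a2 _ _ Ha W') as [J1 J2]; [rewrite S1, S2; lra|].
        rewrite S1 in Nash.
        set (y := eq_flow a2 s L1) in *.
        set (x := eq_flow a2 t L1) in *.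
        assert (t L1 * x * (1 + a2) >= v * y * (1 + a2)) by nra.
        nra. }
      assert (T2 : t L2 = (1 + t L1) / 2).
      { apply (loc_opt (t L1 - a2) (1 + t L1)); [lra|lra|lra|right; lra|lra|].
        intros v v0 vL vH.
        specialize (Nash L2 v v0).
        unfold profit in Nash.
        assert (S1 : upd t L2 v L1 = t L1) by reflexivity.
        assert (S2 : upd t L2 v L2 = v) by reflexivity.
        pose proof (eq_flow_ward a2 (upd t L2 v) Ha) as W'.
        set (s := upd t L2 v) in *. clearbody s.
        destruct (ward_interior a2 _ _ Ha W') as [J1 J2]; [rewrite S1, S2; lra|].
        rewrite S2 in Nash.
        rewrite S1, S2 in J1.
        set (y := eq_flow a2 s L1) in *.
        set (x := eq_flow a2 t L1) in *.
        rewrite J2, I2 in Nash.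
        assert (t L2 * (1 - x) * (1 + a2) >= v * (1 - y) * (1 + a2)) by nra.
        nra. }
      split; lra.
Qed.

Lemma opt_cost a2 : 0 < a2 -> cost a2 (opt_flow a2) * (1 + a2) = a2.
Proof.
  intros Ha.
  set (p := a2 / (1 + a2)).
  assert (Hp : p * (1 + a2) = a2) by (unfold p; field; lra).
  set (xo := fun i => match i with L1 => p | L2 => 1 - p end).
  assert (Cxo : cost a2 xo * (1 + a2) = a2).
  { unfold cost, xo; simpl. nra. }
  assert (Low : forall y, feasible y -> a2 <= cost a2 y * (1 + a2)).
  { intros y [F1 [F2 F3]]. unfold cost; simpl.
    assert (y L2 = 1 - y L1) by lra. rewrite H.
    assert (0 <= ((1 + a2) * y L1 - a2)^2) by apply pow2_ge_0.
    assert (E : (y L1 * y L1 + a2 * (1 - y L1) * (1 - y L1)) * (1 + a2) - a2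
               = ((1 + a2) * y L1 - a2)^2) by ring.
    lra. }
  assert (Oxo : is_opt a2 xo).
  { split; [unfold feasible, xo; simpl; split; [|split]; try lra|].
    - unfold p; apply Rmult_le_pos; [lra|left; apply Rinv_0_lt_compat; lra].
    - assert (p < 1) by nra. lra.
    - intros y Fy. specialize (Low y Fy). nra. }
  assert (Oo : is_opt a2 (opt_flow a2)).
  { unfold opt_flow; apply epsilon_spec; now exists xo. }
  destruct Oo as [Fo Mo]. destruct Oxo as [Fx Mx].
  specialize (Mo xo Fx). specialize (Mx _ Fo). nra.
Qed.

Lemma ratio_val a2 : 0 < a2 -> ratio a2 = (a2 ^ 2 + 7 * a2 + 1) / (9 * a2).
Proof.
  intros Ha. unfold ratio.
  pose proof (opt_cost a2 Ha) as Co.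
  pose proof (eq_flow_ward a2 (tstar a2) Ha) as W.
  destruct (ward_interior a2 _ _ Ha W) as [I1 I2]; [simpl; lra|].
  set (x := eq_flow a2 (tstar a2)) in *.
  assert (X1 : x L1 = (2 * a2 + 1) / (3 * (1 + a2))).
  { apply (Rmult_eq_reg_r (1 + a2)); [|lra]. rewrite I1. unfold tstar. field. lra. }
  assert (Co' : cost a2 (opt_flow a2) = a2 / (1 + a2)).
  { apply (Rmult_eq_reg_r (1 + a2)); [|lra]. rewrite Co. field. lra. }
  rewrite Co'. unfold cost; simpl. rewrite I2, X1. field. lra.
Qed.

Theorem mainTheorem12 :
  (forall a2 : R, 0 < a2 ->
     (forall t : vec, Tinf a2 t ->
        t L1 = (2 * a2 + 1) / 3 /\ t L2 = (a2 + 2) / 3) /\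
     ratio a2 = (a2 ^ 2 + 7 * a2 + 1) / (9 * a2)) /\
  (forall M : R, exists A : R, forall a2 : R, A < a2 -> M < ratio a2).
Proof.
  split.
  - intros a2 Ha. split.
    + intros t Ht. now apply Tinf_char.
    + now apply ratio_val.
  - intros M. exists (9 * Rabs M + 1). intros a2 Ha.
    pose proof (Rabs_pos M). pose proof (Rle_abs M).
    assert (Ha0 : 0 < a2) by lra.
    rewrite (ratio_val a2 Ha0).
    assert (a2 / 9 < (a2 ^ 2 + 7 * a2 + 1) / (9 * a2)).
    { apply (Rmult_lt_reg_r (9 * a2)); [lra|].
      replace ((a2 ^ 2 + 7 * a2 + 1) / (9 * a2) * (9 * a2)) with (a2 ^ 2 + 7 * a2 + 1) by (field; lra).
      nra. }
    lra.
Qed.
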